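(* Let $F$ be a field and $\{E_1,\ldots,E_k\}$ a complete symmetric orthogonal set of idempotents in $F_{n\times n}$. Let $L=(\sigma(r,s))_{1\le r,s\le k}$ be a $k\times k$ array with entries in $\{1,\ldots,k\}$ such that each row and each column of $L$ contains each index exactly once. For each $(r,s)$ let $m_{r,s}$ be a monomial (product of non-negative powers, coefficient $1$) in a set of commuting variables $\mathbf{z}$; the same variable set is used throughout but the monomials may differ. Let $W$ be the $nk\times nk$ block matrix whose $(r,s)$ block is $m_{r,s}E_{\sigma(r,s)}$. Then $W$ is a paraunitary matrix in the variables $\mathbf{z}$, i.e. $WW^*=I_{nk}$.
   Context: For matrices over $\mathbb{C}$, $^*$ is conjugate transpose; otherwise transpose; on polynomial matrices $^*$ additionally replaces each variable $z$ by $z^{-1}$. A complete symmetric orthogonal set of idempotents is $\{E_1,\ldots,E_k\}$ with $E_i\ne0$, $E_i^2=E_i$, $E_iE_j=0$ ($i\ne j$), $\sum_iE_i=I_n$, $E_i^*=E_i$. *)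

(* Defs.v *)
From HB Require Import structures.
From mathcomp Require Import all_boot all_order all_algebra.
From mathcomp Require Import fraction.
From mathcomp Require Export mpoly.
Set Implicit Arguments. Unset Strict Implicit. Unset Printing Implicit Defensive.
Import GRing.Theory.
Local Open Scope ring_scope.

(* The ring of polynomials in d commuting variables z_0..z_{d-1} over F is
   {mpoly F[d]}; Laurent polynomials (needed to express z |-> z^{-1}) live
   in its field of fractions. *)
Definition laurent (F : fieldType) (d : nat) := {fraction {mpoly F[d]}}.

(* The scalar involution underlying ^* : conj = id gives transpose (any field),
   conj = complex conjugation gives conjugate transpose (over C). *)
Definition field_involution (F : fieldType) (conj : {rmorphism F -> F}) :=
  involutive conj.

Definition cstar (F : fieldType) (conj : {rmorphism F -> F}) m n
  (A : 'M[F]_(m, n)) : 'M[F]_(n, m) := (map_mx conj A)^T.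

Definition pstar (F : fieldType) (conj : {rmorphism F -> F}) d
  (p : {mpoly F[d]}) : laurent F d :=
  mmap (fun c : F => tofrac (@mpolyC d F (conj c)))
       (fun i : 'I_d => (tofrac ('X_i : {mpoly F[d]}))^-1) p.

Definition pmxstar (F : fieldType) (conj : {rmorphism F -> F}) d m n
  (P : 'M[{mpoly F[d]}]_(m, n)) : 'M[laurent F d]_(n, m) :=
  (map_mx (@pstar F conj d) P)^T.

Definition paraunitary (F : fieldType) (conj : {rmorphism F -> F}) d m
  (W : 'M[{mpoly F[d]}]_m) : Prop :=
  map_mx (@tofrac _) W *m pmxstar conj W = 1%:M.

Definition complete_sym_orth_idem (F : fieldType) (conj : {rmorphism F -> F})
  n k (E : 'I_k -> 'M[F]_n) : Prop :=
  [/\ forall i, E i != 0,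
      forall i, E i *m E i = E i,
      forall i j, i != j -> E i *m E j = 0,
      \sum_(i < k) E i = 1%:M
    & forall i, cstar conj (E i) = E i].

Definition latin_square k (sigma : 'I_k -> 'I_k -> 'I_k) : Prop :=
  (forall r t, exists! s, sigma r s = t) /\ (forall s t, exists! r, sigma r s = t).

Definition blockW (F : fieldType) d n k (E : 'I_k -> 'M[F]_n)
  (sigma : 'I_k -> 'I_k -> 'I_k) (mon : 'I_k -> 'I_k -> 'X_{1..d}) :
  'M[{mpoly F[d]}]_(\sum_(r < k) n, \sum_(s < k) n) :=
  \mxblock_(r < k, s < k) ('X_[mon r s] *: map_mx (@mpolyC d F) (E (sigma r s))).

(* Main.v *)
Require Import Defs.
From HB Require Import structures.
From mathcomp Require Import all_boot all_order all_algebra.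
From mathcomp Require Import fraction mpoly.
Import GRing.Theory.
Local Open Scope ring_scope.
Section S.
Variables (F : fieldType) (conj : {rmorphism F -> F}) (d : nat).
Local Notation T := (laurent F d).

Definition phi : {rmorphism F -> T} := (@tofrac _ \o @mpolyC d F).
Definition f0 : {rmorphism F -> T} := phi \o conj.
Definition g0 (i : 'I_d) : T := (tofrac ('X_i : {mpoly F[d]}))^-1.

Lemma pstarE p : pstar conj p = mmap f0 g0 p.
Proof. by []. Qed.

Lemma Xi_neq0 (i : 'I_d) : ('X_i : {mpoly F[d]}) != 0.
Proof.
apply/eqP => h; have := mcoeffXU F i i; rewrite h mcoeff0 eqxx => /eqP.
by rewrite eq_sym oner_eq0.
Qed.

Lemma pstar_mon (m : 'X_{1..d}) (c : F) :
  pstar conj ('X_[m] * c%:MP) = mmap1 g0 m * phi (conj c).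
Proof.
rewrite pstarE rmorphM /= mmapX mmapC //.
Qed.

Lemma XY (m : 'X_{1..d}) : tofrac ('X_[m] : {mpoly F[d]}) * mmap1 g0 m = 1.
Proof.
rewrite mpolyXE_id rmorph_prod /mmap1 -big_split /=.
apply: big1 => i _; rewrite rmorphXn -exprMn /g0 mulfV ?expr1n //.
by rewrite tofrac_eq0 Xi_neq0.
Qed.
End S.
Lemma map_mxblock (A B : Type) (f : A -> B) p q (p_ : 'I_p -> nat) (q_ : 'I_q -> nat)
  (B_ : forall i j, 'M[A]_(p_ i, q_ j)) :
  map_mx f (\mxblock_(i, j) B_ i j) = \mxblock_(i, j) map_mx f (B_ i j).
Proof. by apply/matrixP => i j; rewrite !mxE. Qed.

Lemma one_mxblock (R : pzRingType) k n :
  (1%:M : 'M[R]_(\sum_(r < k) n)) = \mxblock_(r < k, t < k) (if r == t then 1%:M else 0 : 'M[R]_n).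
Proof.
rewrite -(@mxdiagZ R k (fun _ => n)) /mxdiag; apply: eq_mxblock => r t.
by case: eqP => // _; rewrite conform_mx_id.
Qed.

Theorem theorem15 (F : fieldType) (conj : {rmorphism F -> F})
  (d n k : nat) (E : 'I_k -> 'M[F]_n) (sigma : 'I_k -> 'I_k -> 'I_k)
  (mon : 'I_k -> 'I_k -> 'X_{1..d}) :
  field_involution conj ->
  complete_sym_orth_idem conj E ->
  latin_square sigma ->
  paraunitary conj (blockW E sigma mon).
Proof.
move=> _ [_ Eidem Eorth Esum Esym] [Lrow Lcol].
rewrite /paraunitary /pmxstar /blockW !map_mxblock tr_mxblock mul_mxblock one_mxblock.
apply: eq_mxblock => r t.
have L1 m (A : 'M[F]_n) : map_mx (@tofrac _) ('X_[m] *: map_mx (@mpolyC d F) A)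
   = tofrac ('X_[m] : {mpoly F[d]}) *: map_mx (phi F d) A.
  by apply/matrixP => i j; rewrite !mxE rmorphM.
have L2 m (A : 'M[F]_n) : (map_mx (@pstar F conj d) ('X_[m] *: map_mx (@mpolyC d F) A))^T
   = mmap1 (g0 F d) m *: map_mx (phi F d) (cstar conj A).
  by apply/matrixP => i j; rewrite !mxE pstar_mon.
under eq_bigr do rewrite L1 L2 Esym -scalemxAr -scalemxAl scalerA -map_mxM.
case: eqP => [<-|ne].
  under eq_bigr do rewrite Eidem mulrC XY scale1r.
  have injr : injective (sigma r).
    move=> s1 s2 h; have [t0 [_ u]] := Lrow r (sigma r s2).
    by rewrite -(u s1 h) -(u s2 erefl).
  rewrite -map_mx_sum.
  have -> : \sum_i E (sigma r i) = \sum_i E i by rewrite [RHS](reindex_inj injr).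
  by rewrite Esum map_mx1.
apply: big1 => s _; rewrite Eorth ?map_mx0 ?scaler0 //.
apply/eqP => h; apply: ne; have [r0 [_ u]] := Lcol s (sigma t s).
by rewrite -(u r h) -(u t erefl).
Qed.
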